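(* Let $L$ be an $n\times n$ complex matrix with at most one nonzero entry in each row and in each column (a generalized permutation matrix in the relaxed sense, allowing zero rows and columns). Let $n_z = n - \mathrm{rank}(L)$ be the number of zero columns (equivalently, zero rows) of $L$. Consider decompositions $L = AD$ with $A$ an $n\times n$ permutation matrix and $D$ an $n\times n$ diagonal matrix. Then $D$ is always uniquely determined by $L$, and the decomposition $L=AD$ is unique if and only if $n_z \le 1$; otherwise there are $n_z!$ ways to choose $A$. However, if one imposes the rule that, for every cycle of the permutation $\sigma$ associated with $A$ (with domain $N_\gamma$), the set $\{j \in N_\gamma : D_j = 0\}$ has at most one element, then the choice of $A$ is unique; and it is always possible to choose $A$ so that this rule holds.
   Context: For a permutation matrix $A$, the associated permutation $\sigma\in S_n$ is defined by $A e_j = e_{\sigma(j)}$, so that $(AD)e_j = D_j e_{\sigma(j)}$ where $D_j$ is the $j$-th diagonal entry of $D$. The permutation $\sigma$ decomposes into disjoint cycles; $N_\gamma\subseteq\{1,\dots,n\}$ denotes the domain of the $\gamma$-th cycle, and these domains partition $\{1,\dots,n\}$. *)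

(* Defs.v *)
From HB Require Import structures.
From mathcomp Require Import all_boot all_order all_algebra all_fingroup.
From mathcomp Require Import complex.
From mathcomp Require Import boolp reals.
Set Implicit Arguments. Unset Strict Implicit. Unset Printing Implicit Defensive.
Import Order.TTheory GRing.Theory Num.Theory.
Local Open Scope ring_scope.

(* The permutation matrix A associated with sigma, following the convention
   A e_j = e_(sigma j), i.e. A i j = 1 iff i = sigma j. *)
Definition perm_matrix (F : nzRingType) (n : nat) (s : 'S_n) : 'M[F]_n :=
  \matrix_(i, j) (i == s j)%:R.

Definition at_most_one_nz_per_row_col (F : nzRingType) (n : nat) (L : 'M[F]_n) : Prop :=
  (forall i j1 j2, L i j1 != 0 -> L i j2 != 0 -> j1 = j2) /\
  (forall j i1 i2, L i1 j != 0 -> L i2 j != 0 -> i1 = i2).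

Definition is_decomp (F : nzRingType) (n : nat) (L : 'M[F]_n) (s : 'S_n) (d : 'rV[F]_n) : Prop :=
  L = perm_matrix F s *m diag_mx d.

Definition cycle_rule (F : nzRingType) (n : nat) (s : 'S_n) (d : 'rV[F]_n) : Prop :=
  forall x : 'I_n, (#|[set j in porbit s x | d 0%R j == 0%R]| <= 1)%N.

Definition zero_cols (F : nzRingType) (n : nat) (L : 'M[F]_n) : {set 'I_n} :=
  [set j | [forall i, L i j == 0]].
Definition zero_rows (F : nzRingType) (n : nat) (L : 'M[F]_n) : {set 'I_n} :=
  [set i | [forall j, L i j == 0]].

(* Main.v *)
Require Import Defs.
From HB Require Import structures.
From mathcomp Require Import all_boot all_order all_algebra all_fingroup.
From mathcomp Require Import complex.
From mathcomp Require Import boolp reals.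
Import Order.TTheory GRing.Theory Num.Theory.
Local Open Scope ring_scope.
From mathcomp Require Import zify.
Set Implicit Arguments. Unset Strict Implicit. Unset Printing Implicit Defensive.
Import Order.TTheory GRing.Theory Num.Theory.
Local Open Scope ring_scope.

Section Main.
Variable F : fieldType.
Variable n : nat.
Variable L : 'M[F]_n.

Definition csum (j : 'I_n) : F := \sum_i L i j.
Definition crow : 'rV[F]_n := \row_j csum j.
Definition valid (s : 'S_n) := [forall j, forall i, (L i j != 0) ==> (s j == i)].

Lemma validP (s : 'S_n) : reflect (forall i j, L i j != 0 -> s j = i) (valid s).
Proof.
apply: (iffP forallP) => [H i j nz|H j]; first by have := forallP (H j) i; rewrite nz => /eqP.
by apply/forallP => i; apply/implyP => /H ->.
Qed.

Lemma valid_col (s : 'S_n) : valid s -> forall i j, L i j = (i == s j)%:R * csum j.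
Proof.
move/validP=> H i j; rewrite /csum (bigD1 (s j)) //= big1 ?addr0.
  case: eqVneq => [->|ne]; first by rewrite mul1r.
  rewrite mul0r; apply/eqP; apply: contraNT ne => /H ->; exact: eqxx.
by move=> k ne; apply/eqP; apply: contraNT ne => /H ->.
Qed.

Lemma decompE (s : 'S_n) d : is_decomp L s d <-> valid s /\ d = crow.
Proof.
rewrite /is_decomp; split.
  move=> HL.
  have E i j : L i j = (i == s j)%:R * d 0 j by rewrite HL mul_mx_diag !mxE.
  split.
    apply/validP => i j; rewrite E; case: (eqVneq i (s j)) => [->//|ne]; rewrite (_ : false%:R = 0) // mul0r eqxx //.
  apply/rowP => j; rewrite !mxE /csum.
  rewrite (bigD1 (s j)) //= big1 ?addr0; first by rewrite E eqxx mul1r.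
  by move=> k /negbTE ne; rewrite E ne mul0r.
move=> [vs ->]; apply/matrixP => i j.
by rewrite mul_mx_diag !mxE (valid_col vs).
Qed.

Lemma valid_agree (s1 s2 : 'S_n) j : valid s1 -> valid s2 -> csum j != 0 -> s1 j = s2 j.
Proof.
move=> v1 /validP v2 nz; apply/esym/v2.
by rewrite (valid_col v1 (s1 j) j) eqxx mul1r.
Qed.

Lemma valid_ext (s s' : 'S_n) : valid s -> (forall j, csum j != 0 -> s' j = s j) -> valid s'.
Proof.
move=> vs H; apply/validP => i j; rewrite (valid_col vs).
case: (eqVneq i (s j)) => [->|ne]; last by rewrite (_ : false%:R = 0) // mul0r eqxx.
by rewrite mul1r => /H.
Qed.

Lemma rank_diag_step m :
  (forall d : 'rV[F]_m, \rank (diag_mx d) = #|[set j | d 0 j != 0]|) ->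
  forall d : 'rV[F]_(1 + m), \rank (diag_mx d) = #|[set j | d 0 j != 0]|.
Proof.
move=> IH d.
have := hsubmxK d.
move: (lsubmx _) (rsubmx _) => l r <-.
rewrite diag_mx_row rank_diag_block_mx IH rank_rV.
rewrite -!sum1_card !big_mkcond /= big_split_ord /=.
rewrite [X in _ = (X + _)%N]big_mkcond [X in _ = (_ + X)%N]big_mkcond /= big_ord1; congr (_ + _)%N; last first.
  by apply: eq_bigr => i _; rewrite !inE row_mxEr.
rewrite inE row_mxEl.
have -> : (diag_mx l == 0) = (l 0 0 == 0).
  apply/eqP/eqP => [/matrixP/(_ 0 0)|H]; first by rewrite !mxE eqxx mulr1n.
  by apply/matrixP => i j; rewrite !ord1 !mxE H mul0rn.
by case: (l 0 0 == 0).
Qed.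

Lemma rank_diag m (d : 'rV[F]_m) : \rank (diag_mx d) = #|[set j | d 0 j != 0]|.
Proof.
elim: m d => [|m IH] d.
  by rewrite flatmx0 mxrank0; apply/esym/eqP; rewrite cards_eq0; apply/eqP/setP => -[].
exact: (rank_diag_step IH).
Qed.
Hypothesis HL : at_most_one_nz_per_row_col L.

Definition colnz j := [exists i, L i j != 0].
Definition bad (s : 'S_n) := [set j | colnz j && (L (s j) j == 0)].

Lemma bad0_valid (s : 'S_n) : bad s = set0 -> valid s.
Proof.
move=> B; apply/validP => i j nz.
case: HL => _ Hc.
have : j \notin bad s by rewrite B inE.
rewrite inE negb_and.
have -> : colnz j by apply/existsP; exists i.
move=> /= nz'; exact: (Hc j (s j) i nz' nz).
Qed.

Lemma exists_valid : exists s, valid s.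
Proof.
suff H : forall k (s : 'S_n), (#|bad s| <= k)%N -> exists s, valid s.
  exact: (H _ 1%g (leqnn _)).
elim=> [|k IH] s.
  by rewrite leqn0 cards_eq0 => /eqP /bad0_valid vs; exists s.
case: (set_0Vmem (bad s)) => [/bad0_valid vs|[j jb]] Hk; first by exists s.
have /andP[/existsP[i nzij] sj0] : colnz j && (L (s j) j == 0) by rewrite inE in jb.
case: HL => Hr _.
pose kk := (s^-1)%g i.
have skk : s kk = i by rewrite /kk permKV.
have kkj : kk != j by apply: contraTneq sj0 => E; rewrite -{1}E skk.
have Likk : L i kk == 0.
  by apply: contraTT kkj => nz; rewrite negbK; apply/eqP; exact: (Hr i kk j nz nzij).
pose s' := (tperm j kk * s)%g.
have sub : bad s' \subset bad s :\ j.
  apply/subsetP => x; rewrite !inE permM.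
  case: tpermP => [->|->|/eqP xj /eqP xk].
  - by rewrite skk (negbTE nzij) andbF.
  - by rewrite kkj skk Likk => /andP[-> _].
  - by rewrite xj.
apply: (IH s'); rewrite -ltnS; apply: leq_trans Hk.
apply: (leq_ltn_trans (subset_leq_card sub)).
by rewrite (cardsD1 j (bad s)) jb.
Qed.
Definition Zc := [set j | csum j == 0].

Lemma rankL (s : 'S_n) : valid s -> \rank L = #|~: Zc|.
Proof.
move=> vs.
have H := (decompE s crow).2 (conj vs erefl).
rewrite H.
have -> : perm_matrix F s = perm_mx (s^-1)%g.
  by apply/matrixP => i j; rewrite !mxE (canF_eq (permKV s)).
rewrite eqmxMfull ?row_full_unit ?unitmx_perm //.
rewrite rank_diag; apply: eq_card => j; by rewrite !inE mxE.
Qed.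

Lemma zero_colsE (s : 'S_n) : valid s -> zero_cols L = Zc.
Proof.
move=> vs; apply/setP => j; rewrite !inE.
apply/forallP/idP => [/(_ (s j))|/eqP H i]; first by rewrite (valid_col vs) eqxx mul1r.
by rewrite (valid_col vs) H mulr0.
Qed.

Lemma zero_rowsE (s : 'S_n) : valid s -> zero_rows L = (s^-1)%g @^-1: Zc.
Proof.
move=> vs; apply/setP => i; rewrite !inE.
apply/forallP/idP => [/(_ ((s^-1)%g i))|/eqP H j].
  by rewrite (valid_col vs) permKV eqxx mul1r.
rewrite (valid_col vs); case: (eqVneq i (s j)) => [E|ne].
  by rewrite E permK in H; rewrite H mulr0.
by rewrite (_ : false%:R = 0) // mul0r.
Qed.

Lemma valid_setE (s0 : 'S_n) : valid s0 ->
  [set s : 'S_n | valid s] = [set (t * s0)%g | t in perm_on Zc].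
Proof.
move=> v0; apply/setP => s; rewrite inE; apply/idP/imsetP => [vs|[t tp ->]].
  exists (s * s0^-1)%g; last by rewrite -mulgA mulVg mulg1.
  apply/subsetP => x; rewrite !inE permM; apply: contraR => nz.
  by rewrite (valid_agree vs v0 nz) permK.
apply: (valid_ext v0) => j nz; rewrite permM (out_perm tp) //.
by rewrite inE.
Qed.

Lemma rule_nz (s : 'S_n) x y : cycle_rule s crow -> csum x == 0 ->
  y \in porbit s x -> y != x -> csum y != 0.
Proof.
move=> R x0 yx yne; apply/negP => y0.
have := R x; rewrite leqNgt => /negP; apply.
apply/card_gt1P; exists x, y; split; rewrite ?inE ?porbit_id ?yx ?mxE //; by rewrite eq_sym.
Qed.

Lemma rule_unique (s1 s2 : 'S_n) : valid s1 -> valid s2 ->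
  cycle_rule s1 crow -> cycle_rule s2 crow -> s1 = s2.
Proof.
move=> v1 v2 R1 R2; apply/permP => j.
have [z0|nz] := eqVneq (csum j) 0; last exact: valid_agree.
have orb : s1 j \in porbit s2 j.
  pose a := s1 j.
  have ex : exists k, (s1 ^+ k)%g a == j.
    have : j \in porbit s1 a by rewrite porbit_sym (mem_porbit s1 1).
    by case/porbitP => k ->; exists k.
  case: (ex_minnP ex) => k /eqP Hk Hmin.
  have E : forall i, (i <= k)%N -> (s2 ^+ i)%g a = (s1 ^+ i)%g a.
    elim=> [|i IH] ik; first by rewrite !expg0 !perm1.
    rewrite !expgSr !permM IH ?(ltnW ik) //.
    set y := (s1 ^+ i)%g a.
    have yj : y != j.
      apply/negP => /eqP yj; have := Hmin i; rewrite /= -/y yj eqxx => /(_ isT).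
      by rewrite leqNgt ik.
    have yo : y \in porbit s1 j.
      have Pa : porbit s1 a = porbit s1 j by rewrite -(porbit_perm s1 1 j) expg1.
      by rewrite -Pa /y mem_porbit.
    exact: esym (valid_agree v1 v2 (rule_nz R1 (introT eqP z0) yo yj)).
  have := E k (leqnn k); rewrite Hk => Hj.
  by rewrite porbit_sym -/a; apply/porbitP; exists k.
pose z := (s2^-1)%g (s1 j).
have zo : z \in porbit s2 j.
  by rewrite porbit_sym -(porbit_perm s2 1) expg1 /z permKV porbit_sym.
have [zj|zj] := eqVneq z j.
  by rewrite -{2}zj /z permKV.
have nzz := rule_nz R2 (introT eqP z0) zo zj.
have := valid_agree v1 v2 nzz; rewrite /z permKV => /perm_inj E.
by rewrite -E eqxx in zj.
Qed.

Lemma rule_exists (s : 'S_n) : valid s -> exists s, valid s /\ cycle_rule s crow.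
Proof.
suff H : forall k (s : 'S_n), valid s -> (n - #|porbits s| <= k)%N ->
   exists s, valid s /\ cycle_rule s crow by move=> vs; exact: (H _ s vs (leqnn _)).
elim=> [|k IH] s1 v1 Hk;
  (case: (boolP [forall x, #|[set j in porbit s1 x | crow 0%R j == 0%R]| <= 1]%N) =>
    [/forallP R|]; first by exists s1);
  rewrite negb_forall => /existsP[x]; rewrite -ltnNge => /card_gt1P[j1 [j2 [h1 h2 ne]]];
  move: h1 h2; rewrite !inE !mxE => /andP[o1 z1] /andP[o2 z2];
  pose s' := (tperm j1 j2 * s1)%g;
  (have v' : valid s' by apply: (valid_ext v1) => y nz; rewrite permM tpermD //;
     [apply: contraTneq nz => <- | apply: contraTneq nz => <-]; rewrite negbK);
  
  (have P2 : porbit s1 j2 = porbit s1 x by apply/eqP; rewrite eq_porbit_mem);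
  (have j12 : j1 \in porbit s1 j2 by rewrite P2);
  (have Hc : #|porbits s'| = (#|porbits s1| + 1)%N by have := porbits_mul_tperm s1 j1 j2; rewrite /= j12 ne addn0);
  have le : (#|porbits s'| <= n)%N by rewrite /porbits (leq_trans (leq_imset_card _ _)) // card_ord.
- move: Hk le; rewrite Hc => h1 h2; exfalso; lia.
- apply: (IH s' v'); move: Hk le; rewrite Hc; lia.
Qed.
End Main.

Unset Implicit Arguments.
Local Open Scope complex_scope.

Theorem mainTheorem1 (R : realType) (n : nat) (L : 'M[R[i]]_n) :
  at_most_one_nz_per_row_col L ->
  let nz := (n - \rank L)%N in
  (nz = #|zero_cols L| /\ nz = #|zero_rows L|) /\
  [/\ (forall s1 s2 d1 d2, is_decomp L s1 d1 -> is_decomp L s2 d2 -> d1 = d2),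
      ((forall s1 s2 d1 d2, is_decomp L s1 d1 -> is_decomp L s2 d2 ->
         s1 = s2 /\ d1 = d2) <-> (nz <= 1)%N),
      #|[set s : 'S_n | `[< exists d, is_decomp L s d >]]| = nz`!,
      (forall s1 s2 d1 d2, is_decomp L s1 d1 -> cycle_rule s1 d1 ->
         is_decomp L s2 d2 -> cycle_rule s2 d2 -> s1 = s2)
    & exists s d, is_decomp L s d /\ cycle_rule s d].
Proof.
move=> HL nz.
have [s0 v0] := exists_valid HL.
have nzE : nz = #|Zc L|.
  rewrite /nz (rankL v0); have := cardsC (Zc L); rewrite card_ord; lia.
have SE : [set s : 'S_n | `[< exists d, is_decomp L s d >]] = [set s | valid L s].
  apply/setP => s; rewrite !inE; apply/asboolP/idP => [[d /decompE[]] //|vs].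
  by exists (crow L); apply/decompE.
have card : #|[set s : 'S_n | `[< exists d, is_decomp L s d >]]| = nz`!.
  rewrite SE (valid_setE v0) card_imset; last exact: mulIg.
  by rewrite card_perm nzE.
split.
  split; first by rewrite (zero_colsE v0).
  rewrite (zero_rowsE v0) card_preimset //; exact: perm_inj.
split => //.
- by move=> s1 s2 d1 d2 /decompE[_ ->] /decompE[_ ->].
- split => [H|H].
    rewrite leqNgt; apply/negP => gt1.
    have : (1 < #|[set s : 'S_n | `[< exists d, is_decomp L s d >]]|)%N.
      rewrite card; move: (nz) gt1 => m; case: m => [|[|k]] //= _.
      by rewrite !factS; apply: (leq_trans _ (leq_pmulr _ _)); rewrite ?muln_gt0 ?fact_gt0.
    case/card_gt1P => s1 [s2 []]; rewrite !inE => /asboolP[d1 h1] /asboolP[d2 h2] ne.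
    by have [E _] := H _ _ _ _ h1 h2; rewrite E eqxx in ne.
  move=> s1 s2 d1 d2 h1 h2.
  have le1 : (#|[set s : 'S_n | `[< exists d, is_decomp L s d >]]| <= 1)%N.
    by rewrite card; move: (nz) H => m; case: m => [|[|k]].
  split; last by move: h1 h2 => /decompE[_ ->] /decompE[_ ->].
  move/card_le1_eqP: le1 => /(_ s1 s2) X; apply/esym/X; rewrite inE; apply/asboolP; by [exists d1 | exists d2].
- move=> s1 s2 d1 d2 /decompE[v1 ->] R1 /decompE[v2 ->] R2.
  exact: (rule_unique v1 v2 R1 R2).
- have [s [vs Rl]] := rule_exists v0.
  by exists s, (crow L); split => //; apply/decompE.
Qed.
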